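(* Let $\Sigma$ be a finite alphabet, let $m = m_1 m_2 \cdots m_n \in \Sigma^n$ be a message with $n \ge 2$, and let $\alpha,\beta,\gamma \in \Sigma$ be pairwise distinct symbols. Let $m' = GCT(\alpha\beta\leftrightarrow\alpha\gamma, m)$ be the generalized context transformation of $m$ (defined in the context below). Let $p_0$ and $p_1$ be the empirical symbol distributions of $m$ and $m'$, respectively. Put $p_{0,\max} = \max\{p_0(\beta), p_0(\gamma)\}$ and $p_{1,\max} = \max\{p_1(\beta), p_1(\gamma)\}$. If $p_{1,\max} > p_{0,\max}$, then $H(m') < H(m)$, i.e. the transformation strictly reduces the zero-order (Shannon) entropy.
   Context: The generalized context transformation $GCT(\alpha\beta\leftrightarrow\alpha\gamma, m)$ exchanges all digrams $\alpha\beta$ for $\alpha\gamma$ and vice versa throughout the message $m$. When $\alpha \notin \{\beta,\gamma\}$, it is the message $m' = m'_1\cdots m'_n$ given by $m'_1 = m_1$ and, for $2 \le i \le n$: - $m'_i = \gamma$ if $m_{i-1} = \alpha$ and $m_i = \beta$; - $m'_i = \beta$ if $m_{i-1} = \alpha$ and $m_i = \gamma$; - $m'_i = m_i$ otherwise. For a message $w \in \Sigma^n$, its empirical symbol distribution is $p(x) = |\{i : w_i = x\}|/n$ for $x \in \Sigma$. Its zero-order (Shannon) entropy is $H(w) = -\sum_{x\in\Sigma} p(x)\log_2 p(x)$, with the convention $0\log_2 0 = 0$. *)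

(* Defs.v *)
From mathcomp Require Import all_boot.
From Stdlib Require Import Reals.
Set Implicit Arguments. Unset Strict Implicit. Unset Printing Implicit Defensive.

Section GCT.
Variable T : eqType.
Variables a b c : T.

(* one step: symbol y preceded (in the ORIGINAL message) by prev *)
Definition gct_sym (prev y : T) : T :=
  if prev == a then (if y == b then c else if y == c then b else y) else y.

Fixpoint gct_aux (prev : T) (s : seq T) : seq T :=
  match s with
  | [::] => [::]
  | y :: t => gct_sym prev y :: gct_aux y t
  end.

Definition gct (m : seq T) : seq T :=
  match m with
  | [::] => [::]
  | x :: s => x :: gct_aux x s
  end.
End GCT.

Definition log2 (x : R) : R := (ln x / ln 2)%R.

Definition plogp (x : R) : R :=
  if Req_EM_T x 0 then 0%R else (x * log2 x)%R.

Definition emp {T : eqType} (w : seq T) (x : T) : R :=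
  (INR (count_mem x w) / INR (size w))%R.

Definition entropy {T : finType} (w : seq T) : R :=
  (- foldr Rplus 0%R (map (fun x => plogp (emp w x)) (enum T)))%R.

(* Main.v *)
Require Import Defs.
From mathcomp Require Import all_boot.
From Stdlib Require Import Reals Lra.

Section Counts.
Variable T : eqType.
Variables a b c : T.
Hypothesis bc : b != c.

Lemma gct_aux_size prev s : size (gct_aux a b c prev s) = size s.
Proof. by elim: s prev => //= y t IH prev; rewrite IH. Qed.

Lemma gct_size s : size (gct a b c s) = size s.
Proof. by case: s => //= x s; rewrite gct_aux_size. Qed.

Lemma sym_other x prev y : x != b -> x != c ->
  (gct_sym a b c prev y == x) = (y == x).
Proof.
move=> xb xc; rewrite /gct_sym; case: (prev == a) => //.
case: (eqVneq y b) => [->|yb].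
  by rewrite ![_ == x]eq_sym (negbTE xb) (negbTE xc).
case: (eqVneq y c) => [->|yc] //.
by rewrite ![_ == x]eq_sym (negbTE xb) (negbTE xc).
Qed.

Lemma sym_bc prev y :
  ((gct_sym a b c prev y == b) + (gct_sym a b c prev y == c) =
   (y == b) + (y == c))%N.
Proof.
rewrite /gct_sym; case: (prev == a) => //.
case: (eqVneq y b) => [->|yb].
  by rewrite eqxx eq_sym (negbTE bc) /= addnC.
case: (eqVneq y c) => [e|yc]; first by rewrite eqxx (negbTE bc).
by rewrite (negbTE yb) (negbTE yc).
Qed.

Lemma aux_other x prev s : x != b -> x != c ->
  count_mem x (gct_aux a b c prev s) = count_mem x s.
Proof.
move=> xb xc; elim: s prev => //= y t IH prev.
by rewrite IH (sym_other x prev y xb xc).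
Qed.

Lemma aux_bc prev s :
  (count_mem b (gct_aux a b c prev s) + count_mem c (gct_aux a b c prev s) =
   count_mem b s + count_mem c s)%N.
Proof.
elim: s prev => //= y t IH prev.
by rewrite addnACA IH sym_bc addnACA.
Qed.

Lemma gct_other x s : x != b -> x != c ->
  count_mem x (gct a b c s) = count_mem x s.
Proof.
move=> xb xc; case: s => //= y s; by rewrite aux_other.
Qed.

Lemma gct_bc s :
  (count_mem b (gct a b c s) + count_mem c (gct a b c s) =
   count_mem b s + count_mem c s)%N.
Proof.
case: s => //= y s.
by rewrite addnACA aux_bc addnACA.
Qed.
End Counts.

Lemma sum_diff (T : Type) (F G : T -> R) l :
  (foldr Rplus 0 (map F l) - foldr Rplus 0 (map G l) =
   foldr Rplus 0 (map (fun x => F x - G x) l))%R.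
Proof. elim: l => [|x l IH] /=; lra. Qed.

Lemma sum_two (T : eqType) (D : T -> R) b c l : b != c ->
  (forall x, x != b -> x != c -> D x = 0%R) -> uniq l ->
  foldr Rplus 0%R (map D l) =
  ((if b \in l then D b else 0) + (if c \in l then D c else 0))%R.
Proof.
move=> bc HD; elim: l => [|x l IH] /=; first lra.
move=> /andP [xl ul]; rewrite IH // !in_cons.
case: (eqVneq x b) => [e|xb].
  subst x; rewrite (negbTE xl) eq_sym (negbTE bc) /=; lra.
case: (eqVneq x c) => [e|xc].
  subst x; rewrite (negbTE xl) /=; lra.
rewrite HD //= ; lra.
Qed.

Definition g (x : R) : R := (x * ln x)%R.

Lemma ln_lt_m1 x : (0 < x)%R -> x <> 1%R -> (ln x < x - 1)%R.
Proof.
move=> x0 x1; have h := exp_ineq1 (ln x) (ln_neq_0 x x1 x0).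
rewrite exp_ln in h; lra.
Qed.

Lemma ln_le_m1 x : (0 < x)%R -> (ln x <= x - 1)%R.
Proof.
move=> x0; have h := exp_ineq1_le (ln x); rewrite exp_ln in h; lra.
Qed.

Lemma coreL s u v s' : (0 <= s')%R -> (s <= u)%R -> (u < v)%R ->
  (s + u = s' + v)%R -> (g u + g s < g v + g s')%R.
Proof.
move=> s'0 su uv E.
have ss : (s' < s)%R by lra.
have s0 : (0 < s)%R by lra.
have u0 : (0 < u)%R by lra.
have v0 : (0 < v)%R by lra.
have H1 : (v * ln v > v * ln u + v - u)%R.
  have h := ln_lt_m1 (u / v) (ltac:(apply Rdiv_lt_0_compat; lra))
    (ltac:(move=> e; have : u = v by field_simplify_eq in e; lra; lra)).
  rewrite /Rdiv ln_mult in h; try (apply Rinv_0_lt_compat); try lra.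
  rewrite ln_Rinv in h; try lra.
  have : (v * (ln u - ln v) < v * (u / v - 1))%R.
    apply Rmult_lt_compat_l; lra.
  have -> : (v * (u / v - 1) = u - v)%R by field; lra.
  lra.
have H2 : (s' * ln s' >= s' * ln s + s' - s)%R.
  case: (Req_dec s' 0) => [->|s'n0].
    lra.
  have s'p : (0 < s')%R by lra.
  have h := ln_le_m1 (s / s') (ltac:(apply Rdiv_lt_0_compat; lra)).
  rewrite /Rdiv ln_mult in h; try (apply Rinv_0_lt_compat); try lra.
  rewrite ln_Rinv in h; try lra.
  have : (s' * (ln s - ln s') <= s' * (s / s' - 1))%R.
    apply Rmult_le_compat_l; lra.
  have -> : (s' * (s / s' - 1) = s - s')%R by field; lra.
  lra.
have H3 : (ln s <= ln u)%R.
  case: (Req_dec s u) => [->|sn]; first lra.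
  left; apply ln_increasing; lra.
rewrite /g.
have : ((v - u) * ln s <= (v - u) * ln u)%R by apply Rmult_le_compat_l; lra.
nra.
Qed.

Lemma core x y x' y' : (0 <= x)%R -> (0 <= y)%R -> (0 <= x')%R -> (0 <= y')%R ->
  (x + y = x' + y')%R -> (Rmax x' y' > Rmax x y)%R ->
  (g x + g y < g x' + g y')%R.
Proof.
move=> x0 y0 x'0 y'0 E; rewrite /Rmax.
case: (Rle_dec x y); case: (Rle_dec x' y') => h1 h2 H.
- have := coreL x y y' x'; lra.
- have := coreL x y x' y'; lra.
- have := coreL y x y' x'; lra.
- have := coreL y x x' y'; lra.
Qed.

Lemma plogpE x : plogp x = (g x / ln 2)%R.
Proof.
rewrite /plogp /g /log2; destruct (Req_EM_T x 0) as [e|ne].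
- rewrite /= e /Rdiv !Rmult_0_l //.
- rewrite /= /Rdiv; ring.
Qed.

Lemma emp_ge0 {T : eqType} (w : seq T) x : (0 <= emp w x)%R.
Proof.
rewrite /emp /Rdiv; apply Rmult_le_pos; first apply pos_INR.
case: (Req_dec (INR (size w)) 0) => [->|h].
- rewrite Rinv_0; lra.
- left; apply Rinv_0_lt_compat; have := pos_INR (size w); lra.
Qed.

Theorem theorem1 (Sigma : finType) (m : seq Sigma) (a b c : Sigma) :
  (2 <= size m)%N -> a != b -> a != c -> b != c ->
  (Rmax (emp (gct a b c m) b) (emp (gct a b c m) c) >
   Rmax (emp m b) (emp m c))%R ->
  (entropy (gct a b c m) < entropy m)%R.
Proof.
move=> sz ab ac bc H.
set m' := gct a b c m.
have Hsum : (emp m' b + emp m' c = emp m b + emp m c)%R.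
  rewrite /emp /m' gct_size /Rdiv -!Rmult_plus_distr_r -!plus_INR.
  by congr (INR _ * _)%R; apply: gct_bc.
have Hc := @core _ _ _ _ (emp_ge0 m b) (emp_ge0 m c) (emp_ge0 m' b) (emp_ge0 m' c)
  (esym Hsum) H.
have ln2 : (0 < ln 2)%R by have := ln_lt_2; lra.
suff : (entropy m - entropy m' = (g (emp m' b) + g (emp m' c)
          - (g (emp m b) + g (emp m c))) / ln 2)%R.
  move=> E.
  have : (0 < (g (emp m' b) + g (emp m' c) - (g (emp m b) + g (emp m c))) / ln 2)%R.
    apply Rdiv_lt_0_compat; lra.
  lra.
rewrite /entropy.
have -> : forall A B : R, (- A - - B = B - A)%R by move=> A B; ring.
rewrite sum_diff (@sum_two _ _ b c) //.
- rewrite !mem_enum /= !plogpE; field; lra.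
- move=> x xb xc; rewrite /emp /m' gct_size gct_other //; ring.
- exact: enum_uniq.
Qed.
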